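(* Let $R$ be a commutative ring, $\mathscr{M}$ a $\mathcal{B}$-diagram of $R$-modules, $\overline{\sigma}$ a ray and $(M[i],\mu_i)$ the corresponding ray-representation. Then: (1) for every $i\in\mathbb{N}$, $\widetilde{\mu}_{\le i}M[i]\supseteq\widetilde{\mu}_{\le i+1}M[i+1]$ and $\widetilde{\mu}_{\le i}0\subseteq\widetilde{\mu}_{\le i+1}0$, and $\bigcup_{i\in\mathbb{N}}\widetilde{\mu}_{\le i}0\subseteq\bigcap_{i\in\mathbb{N}}\widetilde{\mu}_{\le i}M[i]$; (2) if $K=\{0\}\cup\{j:\sigma_j=-\}$ is finite, then $\bigcap_{i\in\mathbb{N}}\widetilde{\mu}_{\le i}M[i]=\widetilde{\mu}_{\le k}M[k]$ where $k=\max K$; (3) if $K=\{0\}\cup\{j:\sigma_j=+\}$ is finite, then $\bigcup_{i\in\mathbb{N}}\widetilde{\mu}_{\le i}0=\widetilde{\mu}_{\le k}0$ where $k=\max K$.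
   Context: The quiver $\mathcal{B}$: vertices are finite $0/1$-sequences including the empty sequence $\emptyset$; for each vertex $\sigma$ there are arrows $\Omega_\sigma\colon\sigma\to\sigma1$ and $\mho_\sigma\colon\sigma0\to\sigma$. A ray is a sequence $(\sigma^i)_{i\ge0}$ of vertices with $\sigma^0=\emptyset$ and $\sigma^i$ equal to $\sigma^{i-1}$ with one symbol appended; $\sigma_i=+$ if the symbol is $1$, $\sigma_i=-$ if $0$ ($i\ge1$). The ray-representation: $M[i]=\mathscr{M}(\sigma^i)$ and $\mu_i$ ($i\ge1$) the image of the arrow between $\sigma^{i-1}$ and $\sigma^i$, so $\mu_i\colon M[i]\to M[i-1]$ if $\sigma_i=-$ and $\mu_i\colon M[i-1]\to M[i]$ if $\sigma_i=+$. The relation $\widetilde{\mu}_i\subseteq M[i]\oplus M[i-1]$ is $\{(x,\mu_i(x)):x\in M[i]\}$ if $\sigma_i=-$ and $\{(\mu_i(y),y):y\in M[i-1]\}$ if $\sigma_i=+$. For $S\subseteq M[n]$, $\widetilde{\mu}_{\le n}S$ is the set of $m_0\in M[0]$ for which there exist $m_i\in M[i]$ ($1\le i\le n$) with $m_n\in S$ and $(m_i,m_{i-1})\in\widetilde{\mu}_i$ for $1\le i\le n$; $\widetilde{\mu}_{\le0}S=S$; $\widetilde{\mu}_{\le i}0$ means $\widetilde{\mu}_{\le i}\{0\}$. *)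

(* Defs.v *)
From HB Require Import structures.
From mathcomp Require Import all_boot all_order all_algebra.
Unset Printing Implicit Defensive.
Import GRing.Theory.
Local Open Scope ring_scope.

(* Vertices of the quiver B: finite 0/1-sequences, encoded as seq bool
   (true = 1, false = 0) in REVERSED order: the list [:: a_n; ...; a_1]
   represents the sequence a_1 a_2 ... a_n.  Hence appending a symbol c to
   the vertex s ("sigma c") is the list  c :: s. *)

Record Bdiagram (R : comPzRingType) := {
  Bmod : seq bool -> lmodType R;
  Omega : forall s : seq bool, {linear Bmod s -> Bmod (true :: s)};
  Mho : forall s : seq bool, {linear Bmod (false :: s) -> Bmod s}
}.
Arguments Bmod {R}.
Arguments Omega {R}.
Arguments Mho {R}.

(* A ray is given by its sequence of appended symbols b : nat -> bool,
   b i being the (i+1)-st symbol (so sigma_{i+1} = + iff b i = true).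
   ray_vertex b i is the vertex sigma^i (in the reversed encoding). *)
Fixpoint ray_vertex (b : nat -> bool) (i : nat) : seq bool :=
  match i with
  | 0 => [::]
  | i'.+1 => b i' :: ray_vertex b i'
  end.

Definition rayM (R : comPzRingType) (D : Bdiagram R) (b : nat -> bool) (i : nat)
  : lmodType R := Bmod D (ray_vertex b i).
Arguments rayM {R}.

(* The relation tilde-mu_{i+1} subset M[i+1] (+) M[i]:
   mu_rel D b i x y  <->  (x, y) \in tilde-mu_{i+1}. *)
Definition mu_rel (R : comPzRingType) (D : Bdiagram R) (b : nat -> bool) (i : nat)
  : rayM D b i.+1 -> rayM D b i -> Prop :=
  match b i as c return Bmod D (c :: ray_vertex b i) -> Bmod D (ray_vertex b i) -> Prop with
  | true => fun x y => x = Omega D (ray_vertex b i) y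
  | false => fun x y => Mho D (ray_vertex b i) x = y
  end.
Arguments mu_rel {R}.

Definition mu_le (R : comPzRingType) (D : Bdiagram R) (b : nat -> bool) (n : nat)
  (S : rayM D b n -> Prop) : rayM D b 0 -> Prop :=
  fun m0 => exists m : forall i : nat, rayM D b i,
    [/\ m 0%N = m0, S (m n) & forall i : nat, (i < n)%N -> mu_rel D b i (m i.+1) (m i)].
Arguments mu_le {R} D b n S _.

Definition fullM (R : comPzRingType) (D : Bdiagram R) (b : nat -> bool) (n : nat)
  : rayM D b n -> Prop := fun _ => True.
Definition zeroM (R : comPzRingType) (D : Bdiagram R) (b : nat -> bool) (n : nat)
  : rayM D b n -> Prop := fun x => x = 0.
Arguments fullM {R}.
Arguments zeroM {R}.

Definition Kminus (b : nat -> bool) (j : nat) : Prop :=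
  j = 0%N \/ (0 < j)%N /\ b j.-1 = false.
Definition Kplus (b : nat -> bool) (j : nat) : Prop :=
  j = 0%N \/ (0 < j)%N /\ b j.-1 = true.

Definition nat_finite (K : nat -> Prop) : Prop :=
  exists N : nat, forall j, K j -> (j <= N)%N.

(* Main.v *)
Require Import Defs.
From mathcomp Require Import all_boot all_order all_algebra.
From Stdlib Require Import PeanoNat.
From mathcomp Require Import zify.
Import GRing.Theory.
Section H.
Variables (R : comPzRingType) (D : Bdiagram R) (b : nat -> bool).
Local Open Scope ring_scope.

Definition patch (m : forall i, rayM D b i) (n : nat) (x : rayM D b n)
  : forall i, rayM D b i :=
  fun i => match PeanoNat.Nat.eq_dec n i with
           | left e => eq_rect n (rayM D b) x i e
           | right _ => m i end.

Lemma patch_eq m n x : patch m n x n = x.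
Proof.
rewrite /patch; case: PeanoNat.Nat.eq_dec => // e.
by rewrite (eq_irrelevance e erefl).
Qed.

Lemma patch_neq m n x i : n <> i -> patch m n x i = m i.
Proof. by rewrite /patch; case: PeanoNat.Nat.eq_dec. Qed.

Lemma mu_rel00 j : mu_rel D b j 0 0.
Proof.
rewrite /mu_rel /rayM /=; case: (b j); by rewrite linear0.
Qed.

Lemma mu_rel_true j (y : rayM D b j) : b j = true -> exists x, mu_rel D b j x y.
Proof.
move: y; rewrite /mu_rel /rayM /=; case: (b j) => // y _.
by exists (Omega D (ray_vertex b j) y).
Qed.

Lemma mu_rel_false j (x : rayM D b j.+1) (y : rayM D b j) :
  b j = false -> mu_rel D b j x y -> x = 0 -> y = 0.
Proof.
move: x y; rewrite /mu_rel /rayM /=; case: (b j) => // x y _ <- ->.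
by rewrite linear0.
Qed.

Lemma extend n (S : rayM D b n -> Prop) (T : rayM D b n.+1 -> Prop) x :
  (forall y : rayM D b n, S y -> exists2 z, T z & mu_rel D b n z y) ->
  mu_le D b n S x -> mu_le D b n.+1 T x.
Proof.
move=> H [m [m0 Sm rel]].
have [z Tz rz] := H _ Sm.
exists (patch m n.+1 z); split.
- by rewrite patch_neq.
- by rewrite patch_eq.
- move=> i; rewrite ltnS leq_eqVlt => /orP[/eqP -> | lt].
    by rewrite patch_eq patch_neq //; lia.
  rewrite !patch_neq; try lia; exact: rel.
Qed.

Lemma restrict n j S x : (j <= n)%N -> mu_le D b n S x -> mu_le D b j (fullM D b j) x.
Proof.
move=> le [m [m0 _ rel]]; exists m; split => // i lt; apply: rel; lia.
Qed.

Lemma zero_ext n d x : mu_le D b n (zeroM D b n) x -> mu_le D b (n + d) (zeroM D b (n + d)) x.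
Proof.
elim: d => [|d IH]; first by rewrite addn0.
move=> h; rewrite addnS; apply: extend (IH h) => y ->.
by exists 0%R => //; apply: mu_rel00.
Qed.

End H.
Arguments extend {R D b n S T x}.
Arguments restrict {R D b n j S x}.
Arguments zero_ext {R D b n} d {x}.
Arguments mu_rel_true {R D b j y}.
Arguments mu_rel_false {R D b j x y}.

Theorem lemma5p11 (R : comPzRingType) (D : Bdiagram R) (b : nat -> bool) :
  (* (1) *)
  ((forall (i : nat) (x : rayM D b 0),
      mu_le D b i.+1 (fullM D b i.+1) x -> mu_le D b i (fullM D b i) x) /\
   (forall (i : nat) (x : rayM D b 0),
      mu_le D b i (zeroM D b i) x -> mu_le D b i.+1 (zeroM D b i.+1) x) /\
   (forall x : rayM D b 0,
      (exists i : nat, mu_le D b i (zeroM D b i) x) ->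
      forall i : nat, mu_le D b i (fullM D b i) x)) /\
  (* (2) *)
  (nat_finite (Kminus b) ->
   forall k : nat, Kminus b k -> (forall j, Kminus b j -> (j <= k)%N) ->
   forall x : rayM D b 0,
     (forall i : nat, mu_le D b i (fullM D b i) x) <-> mu_le D b k (fullM D b k) x) /\
  (* (3) *)
  (nat_finite (Kplus b) ->
   forall k : nat, Kplus b k -> (forall j, Kplus b j -> (j <= k)%N) ->
   forall x : rayM D b 0,
     (exists i : nat, mu_le D b i (zeroM D b i) x) <-> mu_le D b k (zeroM D b k) x).
Proof.
split; [split; [|split]|split].
- move=> i x; apply: restrict; exact: leqnSn.
- move=> i x h; rewrite -addn1; exact: zero_ext.
- move=> x [i h] j.
  case: (leqP j i) => le; first exact: restrict le h.
  have := zero_ext (j - i) h; rewrite subnKC; last exact: ltnW.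
  by apply: restrict.
- move=> _ k _ kmax x; split=> [h|h i]; first exact: h.
  case: (leqP i k) => le; first exact: restrict le h.
  have bt : forall j, (k <= j)%N -> b j = true.
    move=> j kj; case E: (b j) => //.
    have := kmax j.+1 (or_intror (conj (ltn0Sn j) E)); lia.
  suff: forall d, mu_le D b (k + d) (fullM D b (k + d)) x.
    by move/(_ (i - k)); rewrite subnKC //; exact: ltnW.
  elim=> [|d IH]; first by rewrite addn0.
  rewrite addnS; apply: extend IH => y _.
  have [z rz] := mu_rel_true (y := y) (bt _ (leq_addr d k)).
  by exists z.
- move=> _ k _ kmax x; split=> [[i h]|h]; last by exists k.
  case: (leqP i k) => le.
    by have := zero_ext (k - i) h; rewrite subnKC.
  have bf : forall j, (k <= j)%N -> b j = false.
    move=> j kj; case E: (b j) => //.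
    have := kmax j.+1 (or_intror (conj (ltn0Sn j) E)); lia.
  case: h => m [m0 z rel]; exists m; split => //; last first.
    by move=> j jk; apply: rel; lia.
  suff: forall d, (k + d <= i)%N -> m (k + d)%N = 0%R -> m k = 0%R.
    by move/(_ (i - k)); rewrite subnKC ?(ltnW le) //; apply.
  elim=> [|d IH]; first by rewrite addn0.
  move=> kd md; apply: IH; first lia.
  apply: (mu_rel_false (bf _ (leq_addr d k)) (rel _ _)); first lia.
  by rewrite -addnS.
Qed.
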